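(* Let $K^{(1)},K^{(2)}$ be independent fractal percolations on $[0,1]$ with the same parameters $M\in\mathbb{N}_{\geq2}$ and $p\in[0,1]$. Then for any $n\in\mathbb{N}_0$, $$\mathbb{E}N(K_n^{(1)}\cap K_n^{(2)})=(Mp^2)^n\left(2-2M^{-n}-4p\frac{M-1}{M-p}\left[1-\left(\frac pM\right)^n\right]+2p^2\frac{M-1}{M-p^2}\left[1-\left(\frac{p^2}{M}\right)^n\right]\right).$$
   Context: Fractal percolation on $[0,1]$: $K_0=[0,1]$; given $K_{n-1}$, a union of closed grid intervals of length $M^{-(n-1)}$, each is divided into $M$ closed subintervals of length $M^{-n}$, each kept independently (of everything else) with probability $p$; $K_n$ is the union of kept subintervals. $N(A)$ denotes the number of isolated points of $A$. *)

(* Defs.v *)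
From HB Require Import structures.
From mathcomp Require Import all_boot all_order all_algebra.
From mathcomp Require Import all_classical all_reals all_analysis.
From mathcomp Require Import finmap.
Set Implicit Arguments. Unset Strict Implicit. Unset Printing Implicit Defensive.
Import Order.TTheory GRing.Theory Num.Theory.
Import numFieldNormedType.Exports.
Local Open Scope classical_set_scope.
Local Open Scope ring_scope.

(* Index set of all grid intervals at levels 1..n (level k.+1 has M^(k.+1)
   intervals, indexed by 'I_(M ^ k.+1)). *)
Definition gridIdx (M n : nat) : finType := {k : 'I_n & 'I_(M ^ k.+1)}.

(* A realisation of the keep/discard coins of fractal percolation up to level n. *)
Definition Coins (M n : nat) : finType := {ffun gridIdx M n -> bool}.

Definition weight (R : realType) (p : R) (M n : nat) (c : Coins M n) : R :=
  \prod_(x : gridIdx M n) (if c x then p else 1 - p).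

(* The level-n interval number j (j < M^n) belongs to K_n iff it and all its
   ancestors were kept; the ancestor at level k.+1 has index j %/ M^(n - k.+1). *)
Definition kept (M n : nat) (c : Coins M n) (j : nat) : bool :=
  [forall x : gridIdx M n,
     (val (tagged x) == j %/ M ^ (n - (tag x).+1))%N ==> c x].

Definition Kset (R : realType) (M n : nat) (c : Coins M n) : set R :=
  [set x : R | exists j : nat, [/\ (j < M ^ n)%N, kept c j &
      (j%:R / (M ^ n)%:R <= x <= j.+1%:R / (M ^ n)%:R)]].

(* N(A) : number of isolated points of A (0 if there are infinitely many). *)
Definition Niso (R : realType) (A : set R) : nat := #|` fset_set (isolated A)|%fset.

Definition expected_N (R : realType) (M : nat) (p : R) (n : nat) : R :=
  \sum_(c1 : Coins M n) \sum_(c2 : Coins M n)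
     weight p c1 * weight p c2 * (Niso (Kset (R:=R) c1 `&` Kset (R:=R) c2))%:R.

(* Main.v *)
Require Import Defs.
From HB Require Import structures.
From mathcomp Require Import all_boot all_order all_algebra.
From mathcomp Require Import all_classical all_reals all_analysis.
From mathcomp Require Import finmap.
From mathcomp Require Import zify ring lra.
Set Implicit Arguments. Unset Strict Implicit. Unset Printing Implicit Defensive.
Import Order.TTheory GRing.Theory Num.Theory.
Import numFieldNormedType.Exports.
Local Open Scope ring_scope.
Lemma ind_forall (R : realType) (I : finType) (b : I -> bool) :
  ([forall x, b x])%:R = \prod_x (b x)%:R :> R.
Proof.
case: (pickP (fun x => ~~ b x)) => [x /= bx | H].
  have -> : [forall x, b x] = false by apply/negbTE/forallPn; exists x.
  by rewrite (bigD1 x) //= (negbTE bx) mul0r.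
have -> : [forall x, b x] by apply/forallP => x; have := H x; case: (b x).
by rewrite big1 // => x _; have := H x; case: (b x).
Qed.

Lemma Ew_forall (R : realType) (p : R) (M n : nat) (P : pred (gridIdx M n)) :
  \sum_(c : Coins M n) weight p c * ([forall x, P x ==> c x])%:R
  = \prod_x (if P x then p else 1).
Proof.
transitivity (\sum_(c : Coins M n) \prod_x ((if c x then p else 1 - p) * (P x ==> c x)%:R)).
  apply: eq_bigr => c _.
  by rewrite /weight (@ind_forall R _ (fun x => P x ==> c x)) -big_split.
rewrite /Coins -(bigA_distr_bigA (fun x b => (if b then p else 1 - p) * (P x ==> b)%:R)).
apply: eq_bigr => x _; rewrite big_bool /=.
by case: (P x) => /=; ring.
Qed.

Definition anc (M n a : nat) (x : gridIdx M n) : bool :=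
  (val (tagged x) == a %/ M ^ (n - (tag x).+1))%N.

Lemma prod_grid (R : realType) (M n : nat) (F : forall k : 'I_n, 'I_(M ^ k.+1) -> R) :
  \prod_(x : gridIdx M n) F (tag x) (tagged x) = \prod_(k < n) \prod_(i : 'I_(M ^ k.+1)) F k i.
Proof. by rewrite (sig_big_dep xpredT (fun _ => xpredT) F). Qed.

Lemma prod_two (R : realType) (p : R) (m u v : nat) : (u < m)%N -> (v < m)%N ->
  \prod_(i < m) (if (val i == u) || (val i == v) then p else 1) = if u == v then p else p * p.
Proof.
move=> um vm.
rewrite (bigD1 (Ordinal um)) ?eqxx //=.
case: eqP => [<-|uv].
  rewrite big1 ?mulr1 // => i /negbTE; rewrite -val_eqE /= => ->; by rewrite orbb.
rewrite (bigD1 (Ordinal vm)) /=; last by rewrite -val_eqE /=; apply/eqP => /esym.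
rewrite eqxx orbT big1 ?mulr1 // => i /andP[]; rewrite -!val_eqE /= => /negbTE -> /negbTE ->.
by [].
Qed.

Lemma anc_lt (M n a : nat) (k : 'I_n) : (0 < M)%N -> (a < M ^ n)%N ->
  (a %/ M ^ (n - k.+1) < M ^ k.+1)%N.
Proof.
move=> M0 an; rewrite ltn_divLR ?expn_gt0 ?M0 // -expnD subnKC //.
Qed.

Lemma E_kept2 (R : realType) (p : R) (M n a b : nat) : (0 < M)%N ->
  (a < M ^ n)%N -> (b < M ^ n)%N ->
  \sum_(c : Coins M n) weight p c * (kept c a && kept c b)%:R
  = \prod_(k < n) (if (a %/ M ^ (n - k.+1) == b %/ M ^ (n - k.+1))%N then p else p * p).
Proof.
move=> M0 an bn.
have Hk : forall c : Coins M n, kept c a && kept c b = [forall x, (anc a x || anc b x) ==> c x].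
  move=> c; apply/andP/forallP => [[/forallP Ha /forallP Hb] x|H].
    by apply/implyP => /orP[/(implyP (Ha x))|/(implyP (Hb x))].
  by split; apply/forallP => x; apply/implyP => Hx; apply: (implyP (H x)); apply/orP; by [left | right].
under eq_bigr => c _ do rewrite Hk.
rewrite Ew_forall /anc.
rewrite (prod_grid (fun k (i : 'I_(M ^ k.+1)) =>
   if (val i == a %/ M ^ (n - k.+1))%N || (val i == b %/ M ^ (n - k.+1))%N then p else 1)).
by apply: eq_bigr => k _; rewrite prod_two ?anc_lt.
Qed.

Lemma E_kept (R : realType) (p : R) (M n a : nat) : (0 < M)%N -> (a < M ^ n)%N ->
  \sum_(c : Coins M n) weight p c * (kept c a)%:R = p ^+ n.
Proof.
move=> M0 an; have := E_kept2 p M0 an an.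
under eq_bigr => c _ do rewrite andbb.
move=> ->; under eq_bigr => k _ do rewrite eqxx.
by rewrite prodr_const card_ord.
Qed.

Lemma div_pred (d j : nat) : (0 < d)%N -> (0 < j)%N ->
  (j.-1 %/ d == j %/ d)%N = ~~ (d %| j)%N.
Proof.
move=> d0 j0.
have Ej := divn_eq j d; have rj := ltn_pmod j d0.
have Ej1 := divn_eq j.-1 d; have rj1 := ltn_pmod j.-1 d0.
rewrite /dvdn.
move: (j %/ d)%N (j %% d)%N (j.-1 %/ d)%N (j.-1 %% d)%N Ej rj Ej1 rj1 => q r q1 r1 Ej rj Ej1 rj1.
apply/eqP/negP => [E /eqP r0 | H].
  subst r q1; nia.
have r0 : (0 < r)%N by case: r H {Ej rj} => //= _; case; exact: eqxx.
have [lt|ge] := ltnP q1 q.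
  have : (q1.+1 * d <= q * d)%N by rewrite leq_mul2r lt orbT.
  nia.
have [lt2|ge2] := ltnP q q1.
  have : (q.+1 * d <= q1 * d)%N by rewrite leq_mul2r lt2 orbT.
  nia.
lia.
Qed.

Definition Tp (R : realType) (M n : nat) (y : R) (j : nat) : R :=
  \prod_(k < n) (if (M ^ (n - k.+1) %| j)%N then y else 1).

Lemma E_adj (R : realType) (p : R) (M n j : nat) : (0 < M)%N -> (0 < j)%N -> (j < M ^ n)%N ->
  \sum_(c : Coins M n) weight p c * (kept c j.-1 && kept c j)%:R = p ^+ n * Tp M n p j.
Proof.
move=> M0 j0 jn.
rewrite E_kept2 //; last by rewrite (leq_ltn_trans (leq_pred _)).
have -> : p ^+ n = \prod_(k < n) p by rewrite prodr_const card_ord.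
rewrite /Tp -big_split /=.
apply: eq_bigr => k _; rewrite div_pred ?expn_gt0 ?M0 //.
by case: (M ^ (n - k.+1) %| j)%N => /=; rewrite ?mulr1.
Qed.

Lemma ind_andN (R : realType) (x y : bool) : (x && ~~ y)%:R = x%:R - (x && y)%:R :> R.
Proof. by case: x; case: y => /=; rewrite ?subrr ?subr0. Qed.

Lemma E_pat1 (R : realType) (p : R) (M n j : nat) : (0 < M)%N -> (0 < j)%N -> (j < M ^ n)%N ->
  \sum_(c : Coins M n) weight p c * (kept c j.-1 && ~~ kept c j)%:R = p ^+ n - p ^+ n * Tp M n p j.
Proof.
move=> M0 j0 jn.
under eq_bigr => c _ do rewrite ind_andN mulrBr.
rewrite sumrB E_adj // E_kept //.
by rewrite (leq_ltn_trans (leq_pred _)).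
Qed.

Lemma E_pat2 (R : realType) (p : R) (M n j : nat) : (0 < M)%N -> (0 < j)%N -> (j < M ^ n)%N ->
  \sum_(c : Coins M n) weight p c * (~~ kept c j.-1 && kept c j)%:R = p ^+ n - p ^+ n * Tp M n p j.
Proof.
move=> M0 j0 jn.
under eq_bigr => c _ do rewrite andbC ind_andN andbC mulrBr.
by rewrite sumrB E_adj // E_kept.
Qed.
Definition Hs (R : realType) (M n : nat) (y : R) : R :=
  \sum_(0 <= j < M ^ n) (if (0 < j)%N then Tp M n y j else 0).

Lemma Tp_S (R : realType) (M n : nat) (y : R) j :
  Tp M n.+1 y j = y * \prod_(k < n) (if (M * M ^ (n - k.+1) %| j)%N then y else 1).
Proof.
rewrite /Tp big_ord_recr /= subnn expn0 dvd1n mulrC; congr (_ * _).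
apply: eq_bigr => k _ /=.
have -> : (n.+1 - k.+1 = (n - k.+1).+1)%N by have := ltn_ord k; lia.
by rewrite expnS.
Qed.

Lemma sum_mul_split (R : realType) (m M : nat) (F : nat -> R) :
  \sum_(0 <= j < m * M) F j = \sum_(0 <= a < m) \sum_(0 <= r < M) F (a * M + r)%N.
Proof.
elim: m => [|m IH]; first by rewrite mul0n !big_geq.
rewrite big_nat_recr //= -IH mulSn addnC (big_cat_nat _ (leq_addr _ _)) //=.
congr (_ + _).
rewrite -{1}[(m * M)%N]add0n big_addn addKn.
by apply: eq_bigr => r _; rewrite addnC.
Qed.

Lemma Hs_S (R : realType) (M n : nat) (y : R) : (0 < M)%N ->
  Hs M n.+1 y = (M ^ n)%:R * (M%:R - 1) * y + y * Hs M n y.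
Proof.
move=> M0; rewrite /Hs expnSr sum_mul_split mulr_sumr.
have -> : (M ^ n)%:R * (M%:R - 1) * y = \sum_(0 <= a < M ^ n) ((M%:R - 1) * y) :> R.
  by rewrite sumr_const_nat subn0 -mulrA mulr_natl.
rewrite -big_split /=; apply: eq_bigr => a _.
case: M M0 => // M _.
rewrite big_nat_recl //= addn0 muln_gt0 andbT.
have -> : \sum_(0 <= i < M) (if (0 < a * M.+1 + i.+1)%N then Tp M.+1 n.+1 y (a * M.+1 + i.+1) else 0)
   = \sum_(0 <= i < M) y.
  apply: eq_big_nat => i /andP[_ iM]; rewrite addnS ltn0Sn Tp_S big1 ?mulr1 // => k _.
  case: ifP => // /(dvdn_trans (dvdn_mulr _ (dvdnn _))).
  rewrite -addnS dvdn_addr ?dvdn_mull // => /dvdn_leq H.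
  by lia.
rewrite sumr_const_nat subn0 [X in _ = X]addrC; congr (_ + _); last by rewrite -natr1 addrK mulr_natl.
case: ifP => a0 //; last by rewrite mulr0.
rewrite Tp_S /Tp; congr (_ * _); apply: eq_bigr => k _.
by rewrite [(a * _)%N]mulnC dvdn_pmul2l.
Qed.

Lemma Hs_closed (R : realType) (M n : nat) (y : R) : (0 < M)%N ->
  (M%:R - y) * Hs M n y = y * (M%:R - 1) * ((M ^ n)%:R - y ^+ n).
Proof.
move=> M0; elim: n => [|n IH].
  by rewrite /Hs expn0 big_nat1 /= expr0 subrr !mulr0.
rewrite Hs_S // mulrDr.
have -> : (M%:R - y) * (y * Hs M n y) = y * ((M%:R - y) * Hs M n y) by ring.
rewrite IH !natrX !exprS; ring.
Qed.

Lemma Tp_sq (R : realType) (M n : nat) (y : R) j : Tp M n y j ^+ 2 = Tp M n (y ^+ 2) j.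
Proof. by rewrite /Tp -prodrXl; apply: eq_bigr => k _; case: ifP; rewrite ?expr1n. Qed.

Lemma final_alg (R : realType) (M : nat) (p : R) (n : nat) :
  (2 <= M)%N -> 0 <= p <= 1 ->
  \sum_(0 <= j < M ^ n) (if (0 < j)%N then 2 * (p ^+ n - p ^+ n * Tp M n p j) ^+ 2 else 0) =
  (M%:R * p ^+ 2) ^+ n *
  (2 - 2 * (M%:R ^- n)
   - 4 * p * ((M%:R - 1) / (M%:R - p)) * (1 - (p / M%:R) ^+ n)
   + 2 * p ^+ 2 * ((M%:R - 1) / (M%:R - p ^+ 2)) * (1 - (p ^+ 2 / M%:R) ^+ n)).
Proof.
move=> M2 /andP[p0 p1].
have M0 : (0 < M)%N by lia.
have Mr : (2 : R) <= M%:R by rewrite (ler_nat R 2 M).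
have Mp : M%:R - p != 0 by apply: lt0r_neq0; lra.
have p2 : p ^+ 2 <= 1 by rewrite expr_le1.
have Mp2 : M%:R - p ^+ 2 != 0 by apply: lt0r_neq0; lra.
have Mn : (M ^ n)%:R != 0 :> R by rewrite pnatr_eq0 -lt0n expn_gt0 M0.
have H1 := Hs_closed n p M0.
have H2 := Hs_closed n (p ^+ 2) M0.
have E : \sum_(0 <= j < M ^ n) (if (0 < j)%N then 2 * (p ^+ n - p ^+ n * Tp M n p j) ^+ 2 else 0)
  = 2 * (p ^+ n) ^+ 2 * (((M ^ n)%:R - 1) - 2 * Hs M n p + Hs M n (p ^+ 2)).
  have -> : \sum_(0 <= j < M ^ n) (if (0 < j)%N then 2 * (p ^+ n - p ^+ n * Tp M n p j) ^+ 2 else 0)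
    = \sum_(0 <= j < M ^ n) (2 * (p ^+ n) ^+ 2 * ((if (0 < j)%N then 1 else 0)
        - 2 * (if (0 < j)%N then Tp M n p j else 0) + (if (0 < j)%N then Tp M n (p ^+ 2) j else 0))).
    apply: eq_bigr => j _; case: ifP => _; last by ring.
    by rewrite -Tp_sq; ring.
  rewrite -mulr_sumr; congr (_ * _).
  rewrite big_split /= sumrB -mulr_sumr; congr (_ - _ + _).
  rewrite big_ltn ?expn_gt0 ?M0 //= add0r.
  under eq_big_nat => i /andP[i0 _] do rewrite i0.
  by rewrite sumr_const_nat natrB ?expn_gt0 ?M0.
rewrite E.
have -> : Hs M n p = p * (M%:R - 1) * ((M ^ n)%:R - p ^+ n) / (M%:R - p).
  by apply: (mulfI Mp); rewrite H1; field.
have -> : Hs M n (p ^+ 2) = p ^+ 2 * (M%:R - 1) * ((M ^ n)%:R - p ^+ 2 ^+ n) / (M%:R - p ^+ 2).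
  by apply: (mulfI Mp2); rewrite H2; field.
rewrite natrX in Mn *.
have e1 : p ^+ 2 ^+ n = p ^+ n ^+ 2 by rewrite exprAC.
have e2 : (M%:R * p ^+ 2) ^+ n = M%:R ^+ n * p ^+ n ^+ 2 by rewrite exprMn exprAC.
rewrite e2 !expr_div_n e1.
move: (p ^+ n) (M%:R ^+ n) Mn => P Q Qn.
field.
by rewrite Mp Mp2 Qn.
Qed.

Definition pat (M n : nat) (c1 c2 : Coins M n) (j : nat) : bool :=
  [&& kept c1 j.-1, ~~ kept c1 j, ~~ kept c2 j.-1 & kept c2 j].

Section Geo.
Local Open Scope classical_set_scope.

Lemma le_grid (R : realType) (D : R) (u v : nat) : 0 < D ->
  (u%:R / D <= v%:R / D) = (u <= v)%N.
Proof. by move=> D0; rewrite ler_pM2r ?invr_gt0 // ler_nat. Qed.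

Lemma lt_grid (R : realType) (D : R) (u v : nat) : 0 < D ->
  (u%:R / D < v%:R / D) = (u < v)%N.
Proof. by move=> D0; rewrite ltr_pM2r ?invr_gt0 // ltr_nat. Qed.

Lemma grid_succ (R : realType) (D : R) (j : nat) : j.+1%:R / D = j%:R / D + D^-1.
Proof. by rewrite -natr1 mulrDl mul1r. Qed.

Definition iv (R : realType) (D : R) (j : nat) (x : R) : bool :=
  (j%:R / D <= x <= j.+1%:R / D).

Lemma same_iv (R : realType) (D : R) (i k : nat) (y : R) : 0 < D ->
  iv D i y -> k%:R / D < y < k.+1%:R / D -> i = k.
Proof.
move=> D0 /andP[a b] /andP[c d].
have h1 : (i < k.+1)%N by rewrite -(lt_grid _ _ D0); exact: le_lt_trans a d.
have h2 : (k < i.+1)%N by rewrite -(lt_grid _ _ D0); exact: lt_le_trans c b.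
lia.
Qed.

Lemma adj_iv (R : realType) (D : R) (a b : nat) (x : R) : 0 < D ->
  iv D a x -> iv D b x -> a <> b ->
  (b = a.+1 /\ x = b%:R / D) \/ (a = b.+1 /\ x = a%:R / D).
Proof.
move=> D0 /andP[a1 a2] /andP[b1 b2] ab.
case: (ltngtP a b) => [lab|lba|eab] //.
  have h : (b <= a.+1)%N by rewrite -(le_grid _ _ D0); exact: le_trans b1 a2.
  have e : b = a.+1 by lia.
  left; split => //; apply/le_anti; rewrite b1 andbT e; exact: a2.
have h : (a <= b.+1)%N by rewrite -(le_grid _ _ D0); exact: le_trans a1 b2.
have e : a = b.+1 by lia.
right; split => //; apply/le_anti; rewrite a1 andbT e; exact: b2.
Qed.

Lemma noniso (R : realType) (D : R) (A : set R) (j : nat) (x : R) : 0 < D ->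
  (forall y, iv D j y -> A y) -> iv D j x -> ~ isolated A x.
Proof.
move=> D0 sub xj [_ [V /nbhs_ballP [e /= e0 eV] VA]].
have Di : 0 < D^-1 by rewrite invr_gt0.
set d := Num.min (e / 2) (D^-1 / 2).
have d0 : 0 < d by rewrite lt_min !divr_gt0.
have d1 : d <= e / 2 by rewrite ge_min lexx.
have d2 : d <= D^-1 / 2 by rewrite ge_min lexx orbT.
move: xj; rewrite /iv grid_succ => /andP[x1 x2].
set a := j%:R / D in x1 x2 *.
pose y := if x + d <= a + D^-1 then x + d else x - d.
have yj : iv D j y.
  rewrite /iv grid_succ -/a /y; case: ifP => h; apply/andP; split; lra.
have yx : y != x by rewrite /y; case: ifP => _; apply/eqP; lra.
have bxy : ball x e y.
  rewrite -ball_normE /= ltr_norml /y; case: ifP => _; apply/andP; split; lra.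
have : (V `&` A) y by split; [exact: eV | exact: sub].
by rewrite VA => /= yx'; move: yx; rewrite yx' eqxx.
Qed.


Lemma Kset_iv (R : realType) (M n : nat) (c : Coins M n) (x : R) :
  Kset c x <-> exists j, [/\ (j < M ^ n)%N, kept c j & iv (M ^ n)%:R j x].
Proof. by []. Qed.

Lemma both_noniso (R : realType) (M n : nat) (c1 c2 : Coins M n) (i : nat) (x : R) :
  (0 < M)%N -> (i < M ^ n)%N -> kept c1 i -> kept c2 i -> iv (M ^ n)%:R i x ->
  ~ isolated (Kset (R:=R) c1 `&` Kset (R:=R) c2) x.
Proof.
move=> M0 iN k1 k2 xi; apply: (noniso (D := (M ^ n)%:R) (j := i)) => //.
  by rewrite ltr0n expn_gt0 M0.
by move=> y yi; split; exists i.
Qed.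

Lemma iso_sub (R : realType) (M n : nat) (c1 c2 : Coins M n) (x : R) : (0 < M)%N ->
  isolated (Kset (R:=R) c1 `&` Kset (R:=R) c2) x ->
  exists j, [/\ (0 < j)%N, (j < M ^ n)%N, pat c1 c2 j || pat c2 c1 j & x = j%:R / (M ^ n)%:R].
Proof.
move=> M0 iso.
have D0 : 0 < (M ^ n)%:R :> R by rewrite ltr0n expn_gt0 M0.
have [[a [aN ka ia]] [b [bN kb ib]]] := isolatedS iso.
have [eab|nab] := eqVneq a b.
  by subst b; exfalso; exact: (both_noniso M0 aN ka kb ia iso).
have [[eb ex]|[ea ex]] := adj_iv D0 ia ib (elimN eqP nab).
  exists b; split => //; first by rewrite eb.
  apply/orP; left; rewrite /pat eb /= -eb ka kb /= andbT.
  apply/andP; split; apply/negP => k.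
    apply: (both_noniso M0 bN k kb ib iso).
  apply: (both_noniso M0 aN ka k ia iso).
exists a; split => //; first by rewrite ea.
apply/orP; right; rewrite /pat ea /= -ea ka kb /= andbT.
apply/andP; split; apply/negP => k.
  apply: (both_noniso M0 aN ka k ia iso).
apply: (both_noniso M0 bN k kb ib iso).
Qed.

Lemma iso_sup (R : realType) (M n : nat) (c1 c2 : Coins M n) (j : nat) : (0 < M)%N ->
  (0 < j)%N -> (j < M ^ n)%N -> pat c1 c2 j ->
  isolated (Kset (R:=R) c1 `&` Kset (R:=R) c2) (j%:R / (M ^ n)%:R).
Proof.
move=> M0; case: j => // i _ jN /and4P[k1 nk1 nk2 k2] /=.
have D0 : 0 < (M ^ n)%:R :> R by rewrite ltr0n expn_gt0 M0.
set D := (M ^ n)%:R : R.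
have Di : 0 < D^-1 by rewrite invr_gt0.
have inA : (Kset (R:=R) c1 `&` Kset (R:=R) c2) (i.+1%:R / D).
  split.
    exists i; split => //; first exact: ltnW.
    by rewrite /iv lexx andbT le_grid.
  exists i.+1; split => //.
  by rewrite /iv lexx /= le_grid.
split; first exact: mem_set.
exists (ball (i.+1%:R / D) D^-1).
  by apply/nbhs_ballP; exists D^-1.
apply/seteqP; split => y /=; last by move=> ->; split => //; exact: ballxx.
move=> [bxy [[i1 [_ ki1 iv1]] [i2 [_ ki2 iv2]]]].
move: bxy; rewrite -ball_normE /= ltr_norml => /andP[h1 h2].
case: (ltgtP y (i.+1%:R / D)) => [yx|xy|->] //.
  have e : i2 = i.
    apply: (same_iv D0 iv2); move: h1 h2 yx; rewrite !grid_succ => h1 h2 yx.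
    apply/andP; split; lra.
  by move: nk2; rewrite -e ki2.
have e : i1 = i.+1.
  apply: (same_iv D0 iv1); move: h1 h2 xy; rewrite !grid_succ => h1 h2 xy.
  apply/andP; split; lra.
by move: nk1; rewrite -e ki1.
Qed.
Lemma cnt_img (T : choiceType) (N : nat) (g : 'I_N -> T) (b : 'I_N -> bool) :
  injective g ->
  #|` fset_set (g @` [set j | b j])| = (\sum_(j < N) b j)%N.
Proof.
move=> gi.
rewrite fset_set_image; last exact: finite_finset.
rewrite card_imfset //.
have -> : fset_set [set j | b j] = [fset j in (b : pred _)]%fset.
  apply/fsetP => j; rewrite in_fset_set; last exact: finite_finset.
  rewrite !inE /=. apply/idP/idP; rewrite in_setE //.
rewrite -(@card_imfset imfset_key _ _ _ _ (@inj_id _)) card_fset card_finset.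
rewrite -sum1_card big_mkcond /=; apply: eq_bigr => j _.
by rewrite unfold_in; case: (b j).
Qed.

Lemma geo (R : realType) (M n : nat) (c1 c2 : Coins M n) : (0 < M)%N ->
  Niso (Kset (R:=R) c1 `&` Kset (R:=R) c2) =
  (\sum_(0 <= j < M ^ n) ((0 < j) && (pat c1 c2 j || pat c2 c1 j)))%N.
Proof.
move=> M0.
have D0 : 0 < (M ^ n)%:R :> R by rewrite ltr0n expn_gt0 M0.
pose g := fun (j : 'I_(M ^ n)) => (val j)%:R / (M ^ n)%:R : R.
have E : isolated (Kset (R:=R) c1 `&` Kset (R:=R) c2) =
   g @` [set j : 'I_(M ^ n) | (0 < val j)%N && (pat c1 c2 (val j) || pat c2 c1 (val j))].
  apply/seteqP; split => x.
    move/(iso_sub M0) => [j [j0 jN pj ->]].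
    by exists (Ordinal jN) => //=; rewrite j0 pj.
  move=> [j /= /andP[j0 /orP[pj|pj]] <-]; rewrite /g.
    by have := @iso_sup R _ _ c1 c2 _ M0 j0 (ltn_ord j) pj.
  by rewrite setIC; have := @iso_sup R _ _ c2 c1 _ M0 j0 (ltn_ord j) pj.
rewrite /Niso E cnt_img; first by rewrite big_mkord.
move=> u v; rewrite /g => /(mulIf (invr_neq0 (lt0r_neq0 D0))) /eqP.
by rewrite eqr_nat => /eqP /val_inj.
Qed.

End Geo.


Lemma sum_prod2 (R : realType) (p : R) (M n : nat) (A B : Coins M n -> R) :
  \sum_(c1 : Coins M n) \sum_(c2 : Coins M n) weight p c1 * weight p c2 * (A c1 * B c2)
  = (\sum_(c : Coins M n) weight p c * A c) * (\sum_(c : Coins M n) weight p c * B c).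
Proof.
rewrite mulr_suml; apply: eq_bigr => c1 _; rewrite mulr_sumr; apply: eq_bigr => c2 _.
ring.
Qed.

Theorem proposition5p7 (R : realType) (M : nat) (p : R) (n : nat) :
  (2 <= M)%N -> 0 <= p <= 1 ->
  expected_N M p n =
  (M%:R * p ^+ 2) ^+ n *
  (2 - 2 * (M%:R ^- n)
   - 4 * p * ((M%:R - 1) / (M%:R - p)) * (1 - (p / M%:R) ^+ n)
   + 2 * p ^+ 2 * ((M%:R - 1) / (M%:R - p ^+ 2)) * (1 - (p ^+ 2 / M%:R) ^+ n)).
Proof.
move=> M2 p01; rewrite -final_alg //.
have M0 : (0 < M)%N by lia.
rewrite /expected_N.
under eq_bigr => c1 _ do under eq_bigr => c2 _ do rewrite geo // natr_sum mulr_sumr.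
under eq_bigr => c1 _ do rewrite exchange_big /=.
rewrite exchange_big /=.
apply: eq_big_nat => j /andP[_ jn].
case: (ltnP 0 j) => j0; last first.
  by rewrite big1 // => c1 _; rewrite big1 // => c2 _; rewrite /= mulr0.
transitivity (\sum_(c1 : Coins M n) \sum_(c2 : Coins M n) (weight p c1 * weight p c2 *
    ((kept c1 j.-1 && ~~ kept c1 j)%:R * (~~ kept c2 j.-1 && kept c2 j)%:R) +
    weight p c1 * weight p c2 *
    ((~~ kept c1 j.-1 && kept c1 j)%:R * (kept c2 j.-1 && ~~ kept c2 j)%:R))).
  apply: eq_bigr => c1 _; apply: eq_bigr => c2 _; rewrite /= /pat -mulrDr; congr (_ * _).
  by case: (kept c1 j.-1); case: (kept c1 j); case: (kept c2 j.-1); case: (kept c2 j);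
     rewrite /= ?mulr0 ?mulr1 ?add0r ?addr0.
under eq_bigr => c1 _ do rewrite big_split /=.
rewrite big_split /= !sum_prod2 E_pat1 // E_pat2 //.
ring.
Qed.
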